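(* Let $n$ be a composite positive integer and let $\pi\in S(\mathbb{Z}_n)$ be a permutation induced by a polynomial with coefficients in $\mathbb{Z}_n$ (i.e. there is $f\in\mathbb{Z}_n[x]$ with $\pi(x)=f(x)$ for all $x\in\mathbb{Z}_n$). Then $t([\pi])\leq n-3$.
   Context: $S(\mathbb{Z}_n)$ is the set of bijections $\mathbb{Z}_n\to\mathbb{Z}_n$. For $\pi\in S(\mathbb{Z}_n)$, $\mathrm{cyc}(\pi)$ is the number of cycles (including fixed points) of $\pi$, $t(\pi)=n-\mathrm{cyc}(\pi)$, $[\pi]=\{x\mapsto \pi(x+b): b\in\mathbb{Z}_n\}$ and $t([\pi])=\min_{\sigma\in[\pi]}t(\sigma)$. *)

(* Defs.v *)
From HB Require Import structures.
From mathcomp Require Import all_boot all_order all_algebra all_fingroup.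
Set Implicit Arguments. Unset Strict Implicit. Unset Printing Implicit Defensive.
Import GRing.Theory.
Local Open Scope ring_scope.

Definition t_perm (n : nat) (s : {perm 'Z_n}) : nat := (n - #|porbits s|)%N.

Lemma shift_inj (n : nat) (pi : {perm 'Z_n}) (b : 'Z_n) :
  injective (fun x : 'Z_n => pi (x + b)).
Proof. by move=> x y /perm_inj /addIr. Qed.

Definition shiftp (n : nat) (pi : {perm 'Z_n}) (b : 'Z_n) : {perm 'Z_n} :=
  perm (@shift_inj n pi b).

(* t([pi]) = min over b in Z_n of t(x |-> pi(x+b)); the seed n is harmless
   since t_perm is always <= n *)
Definition t_class (n : nat) (pi : {perm 'Z_n}) : nat :=
  \big[minn/n]_(b : 'Z_n) t_perm (shiftp pi b).

(* Main.v *)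
Require Import Defs.
From HB Require Import structures.
From mathcomp Require Import all_boot all_order all_algebra all_fingroup.
Import GRing.Theory.
Local Open Scope ring_scope.

Lemma poly_diff (R : comNzRingType) (f : {poly R}) (x y : R) :
  exists q : R, f.[x] - f.[y] = (x - y) * q.
Proof.
have : root (f - (f.[y])%:P) y by rewrite /root !hornerE subrr.
move/factor_theorem=> [q Hq]; exists q.[x].
have := congr1 (horner^~ x) Hq; rewrite !hornerE => ->; by rewrite mulrC.
Qed.

Lemma bigmin_le_seq (I : eqType) (r : seq I) (x0 : nat) (F : I -> nat) (j : I) :
  j \in r -> (\big[minn/x0]_(i <- r) F i <= F j)%N.
Proof.
elim: r => [|i r IH] //; rewrite big_cons inE => /orP[/eqP <-|/IH H].
  exact: geq_minl.
exact: leq_trans (geq_minr _ _) H.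
Qed.

Theorem proposition1p6 (n : nat) (hn : (1 < n)%N) (hcomp : ~~ prime n)
  (pi : {perm 'Z_n}) (f : {poly 'Z_n}) (hf : forall x : 'Z_n, pi x = f.[x]) :
  (t_class pi <= n - 3)%N.
Proof.
case: n hn hcomp pi f hf => [|[|m]] // _ hcomp pi f hf.

set d := pdiv m.+2.
have dpr : prime d by apply: pdiv_prime.
have d1 : (1 < d)%N by apply: prime_gt1.
have dN : (d %| m.+2)%N by apply: pdiv_dvd.
have dltN : (d < m.+2)%N.
  rewrite ltn_neqAle pdiv_leq // andbT; apply/eqP=> E.
  by move: hcomp; rewrite -E dpr.
set b := (pi^-1)%g 0.
set s := shiftp pi b.
have sE x : s x = pi (x + b) by rewrite permE.
have s0 : s 0 = 0 by rewrite sE add0r permKV.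
pose A := [set x : 'Z_m.+2 | [exists k : 'Z_m.+2, x == d%:R * k]].
have sA x : x \in A -> s x \in A.
  rewrite !inE => /existsP[k /eqP xk].
  have [q Hq] := poly_diff _ f (x + b) (0 + b).
  apply/existsP; exists (k * q); apply/eqP.
  rewrite -(subr0 (s x)) -s0 !sE !hf Hq xk.
  by rewrite add0r addrK mulrA.
have dval : val (d%:R : 'Z_m.+2) = d by rewrite Zp_nat /= modn_small.
pose a : 'Z_m.+2 := d%:R.
have aA : a \in A by rewrite inE; apply/existsP; exists 1; rewrite mulr1.
have a0 : a != 0 by apply/eqP=> /(congr1 val); rewrite dval /= => E; rewrite E in d1.
have nA1 : (1 : 'Z_m.+2) \notin A.
  rewrite inE; apply/negP => /existsP[k /eqP /(congr1 val)].
  have -> : val (d%:R * k : 'Z_m.+2) = (((val (d%:R : 'Z_m.+2)) * val k) %% m.+2)%N by [].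
  rewrite dval /= => E.
  have E' : 1%N = ((d * k) %% m.+2)%N by rewrite -E modn_small.
  have := congr1 (modn^~ d) E'.
  have H : (((d * k) %% m.+2) %% d = 0)%N by rewrite (modn_dvdm (d * k) dN) modnMr.
  by rewrite /= H modn_small.
have P0 y : y \in porbit s 0 -> y = 0.
  by move/porbitP=> [i ->]; rewrite permX_fix.
have PA y : y \in porbit s a -> y \in A.
  move/porbitP=> [i ->]; rewrite permX; elim: i => [|i IH] //=; exact: sA.
pose P0s := porbit s 0; pose Pa := porbit s a; pose P1 := porbit s 1.
have sub : P0s |: (Pa |: [set P1]) \subset porbits s.
  by apply/subsetP=> X; rewrite !inE => /or3P[] /eqP ->; apply: imset_f.
have c3 : #|P0s |: (Pa |: [set P1])| = 3%N.
  rewrite !cardsU1 cards1 !inE.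
  have n0a : P0s != Pa.
    apply/eqP=> E; move: (porbit_id s a); rewrite -/Pa -E => /P0 /eqP.
    by rewrite (negbTE a0).
  have n01 : P0s != P1.
    apply/eqP=> E; move: (porbit_id s 1); rewrite -/P1 -E => /P0 /eqP.
    by rewrite oner_eq0.
  have na1 : Pa != P1.
    apply/eqP=> E; move: (porbit_id s 1); rewrite -/P1 -E => /PA.
    by rewrite (negbTE nA1).
  by rewrite (negbTE n0a) (negbTE n01) (negbTE na1).
have le3 := subset_leq_card sub; rewrite c3 in le3.
apply: (@leq_trans (t_perm s)).
  by rewrite /t_class; apply: bigmin_le_seq; rewrite mem_index_enum.
by rewrite /t_perm leq_sub2l.
Qed.
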